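(* Let $\mathcal{C}$ be a strict monoidal simplicial category and give $\mathcal{C}^{\mathrm{op}}$ its canonical strict monoidal structure. Then $(\mathcal{C}^\otimes)_{\mathrm{op}}\cong(\mathcal{C}^{\mathrm{op}})^\otimes$.
   Context: A strict monoidal simplicial category is a monoid in $(\mathbf{sCat},\times,* )$; $\mathcal{C}^{\mathrm{op}}(x,y)=\mathcal{C}(y,x)$ with the same tensor on objects. $\mathcal{C}^\otimes$ has objects finite sequences $[x_1,\dots,x_n]$ of objects of $\mathcal{C}$, hom simplicial sets $\coprod_{f\in\Delta([m],[n])}\prod_{i=1}^m\mathcal{C}(x_{f(i-1)+1}\otimes\cdots\otimes x_{f(i)},y_i)$, composition via $\Delta$, $\mathcal{C}$ and $\otimes$, with forgetful simplicial opfibration $\mathcal{C}^\otimes\to\Delta^{\mathrm{op}}$. For $F\colon\mathcal{D}\to\mathbf{sCat}$, $\mathbf{Gr}F$ has objects $(x,c)$, $x\in Fc$, homs $\coprod_{\varphi\colon c\to d}Fd(F\varphi\,x,y)$, composition $(\tau,\psi)\circ(\sigma,\varphi)=(\tau\circ F\psi(\sigma),\psi\varphi)$; by the enriched Grothendieck correspondence, split simplicial opfibrations $P\colon\mathcal{E}\to\mathcal{D}$ (with chosen coCartesian lifts) correspond to functors $\mathcal{D}\to\mathbf{sCat}$ via $\mathbf{Gr}$. The fiberwise opposite of such $P$ is $P_{\mathrm{op}}\colon\mathcal{E}_{\mathrm{op}}\to\mathcal{D}$ given by $\mathbf{Gr}\circ\mathrm{op}_s\circ\mathbf{Gr}^{-1}(P)$,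 where $\mathrm{op}_s$ is the opposite-category functor applied pointwise. Here $\mathcal{C}^\otimes\to\Delta^{\mathrm{op}}$ is split with lifts $[f;1_{y_1},\dots,1_{y_m}]$, $y_i=x_{f(i-1)+1}\otimes\cdots\otimes x_{f(i)}$. *)

(* Defs.v *)
From mathcomp Require Import all_boot.
Set Implicit Arguments. Unset Strict Implicit. Unset Printing Implicit Defensive.

(* The simplex category Delta: [m] = {0,..,m} is 'I_m.+1; morphisms    *)
(* are all (weakly) monotone maps.                                     *)
Record Delta (m n : nat) := MkDelta {
  dfun :> 'I_m.+1 -> 'I_n.+1;
  dmono : forall i j : 'I_m.+1, i <= j -> dfun i <= dfun j }.

Definition Delta_id (n : nat) : Delta n n := @MkDelta n n id (fun i j h => h).

Definition Delta_comp (k m n : nat) (f : Delta m n) (g : Delta k m) : Delta k n :=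
  @MkDelta k n (fun i => f (g i)) (fun i j h => dmono f (dmono g h)).

(* Ordinary categories (only the data is needed: used for Delta^op).   *)
Record ordCat := {
  dob : Type;
  dhom : dob -> dob -> Type;
  dcomp : forall a b c, dhom b c -> dhom a b -> dhom a c;
  did : forall a, dhom a a }.
Arguments dcomp {o} {a b c}.
Arguments did {o}.
Arguments dhom : clear implicits.

Definition DeltaOp : ordCat :=
  {| dob := nat;
     dhom a b := Delta b a;
     dcomp a b c psi phi := Delta_comp phi psi;
     did a := Delta_id a |}.

(* A simplicial set is a presheaf on Delta: X n with                   *)
(* act (f : Delta m n) : X n -> X m.  shom x y is the hom simplicial    *)
(* set C(x,y); composition, identities and the tensor are given        *)
(* levelwise, and the laws (simplicial-set laws, naturality, category  *)
(* laws, functoriality of the tensor, strict associativity/unitality)  *)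
(* are collected in [is_strict_monoidal_sCat].                         *)
Record smsCat := {
  sob : Type;
  shom : sob -> sob -> nat -> Type;
  sact : forall x y m n, Delta m n -> shom x y n -> shom x y m;
  scomp : forall x y z n, shom y z n -> shom x y n -> shom x z n;
  sid : forall x n, shom x x n;
  sten : sob -> sob -> sob;
  sunit : sob;
  stenm : forall x x' y y' n,
      shom x x' n -> shom y y' n -> shom (sten x y) (sten x' y') n }.
Arguments sact {s x y m n}.
Arguments scomp {s x y z n}.
Arguments sid {s}.
Arguments sten {s}.
Arguments sunit {s}.
Arguments stenm {s x x' y y' n}.
Arguments shom : clear implicits.
Arguments sob : clear implicits.

Definition TH (C : smsCat) (n : nat) := {p : sob C * sob C & shom C p.1 p.2 n}.
Definition toTH (C : smsCat) (x y : sob C) (n : nat) (h : shom C x y n) : TH C n :=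
  existT (fun p : sob C * sob C => shom C p.1 p.2 n) (x, y) h.

Definition is_strict_monoidal_sCat (C : smsCat) : Prop :=
  (forall x y n (h : shom C x y n), sact (Delta_id n) h = h) /\
  (forall x y k m n (f : Delta m n) (g : Delta k m) (h : shom C x y n),
      sact (Delta_comp f g) h = sact g (sact f h)) /\
  (forall x y z m n (f : Delta m n) (u : shom C y z n) (v : shom C x y n),
      sact f (scomp u v) = scomp (sact f u) (sact f v)) /\
  (forall (x : sob C) m n (f : Delta m n), sact f (sid x n) = sid x m) /\
  (forall w x y z n (u : shom C y z n) (v : shom C x y n) (t : shom C w x n),
      scomp u (scomp v t) = scomp (scomp u v) t) /\
  (forall x y n (u : shom C x y n), scomp (sid y n) u = u) /\
  (forall x y n (u : shom C x y n), scomp u (sid x n) = u) /\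
  (forall x x' y y' m n (f : Delta m n) (u : shom C x x' n) (v : shom C y y' n),
      sact f (stenm u v) = stenm (sact f u) (sact f v)) /\
  (forall x x' x'' y y' y'' n (u' : shom C x' x'' n) (u : shom C x x' n)
          (v' : shom C y' y'' n) (v : shom C y y' n),
      stenm (scomp u' u) (scomp v' v) = scomp (stenm u' v') (stenm u v)) /\
  (forall (x y : sob C) n, stenm (sid x n) (sid y n) = sid (sten x y) n) /\
  (forall x y z : sob C, sten (sten x y) z = sten x (sten y z)) /\
  (forall x : sob C, sten sunit x = x) /\
  (forall x : sob C, sten x sunit = x) /\
  (forall x x' y y' z z' n (u : shom C x x' n) (v : shom C y y' n) (w : shom C z z' n),
      toTH (stenm (stenm u v) w) = toTH (stenm u (stenm v w))) /\
  (forall x x' n (u : shom C x x' n), toTH (stenm (sid sunit n) u) = toTH u) /\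
  (forall x x' n (u : shom C x x' n), toTH (stenm u (sid sunit n)) = toTH u).

Definition opC (C : smsCat) : smsCat :=
  {| sob := sob C;
     shom x y n := shom C y x n;
     sact x y m n f h := @sact C y x m n f h;
     scomp x y z n u v := @scomp C z y x n v u;
     sid x n := sid x n;
     sten := @sten C;
     sunit := @sunit C;
     stenm x x' y y' n u v := @stenm C x' x y' y n u v |}.

Fixpoint tens (C : smsCat) (s : seq (sob C)) : sob C :=
  match s with
  | [::] => sunit
  | x :: s' => match s' with [::] => x | _ => sten x (tens s') end
  end.

Definition tenTH (C : smsCat) (n : nat) (a b : TH C n) : TH C n :=
  match a, b with
  | existT p u, existT q v =>
      existT (fun r : sob C * sob C => shom C r.1 r.2 n)
             (sten p.1 q.1, sten p.2 q.2) (stenm u v)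
  end.

Fixpoint tensL (C : smsCat) (n : nat) (s : seq (TH C n)) : TH C n :=
  match s with
  | [::] => toTH (sid (@sunit C) n)
  | a :: s' => match s' with [::] => a | _ => tenTH a (tensL s') end
  end.

Definition compTH (C : smsCat) (n : nat) (b a c : TH C n) : Prop :=
  exists (x y z : sob C) (v : shom C y z n) (u : shom C x y n),
    b = toTH v /\ a = toTH u /\ c = toTH (scomp v u).

(* For x = (x_1..x_n) and f : [m] -> [n], i : 'I_m (standing for i+1),
   the object x_{f(i)+1} (x) ... (x) x_{f(i+1)}. *)
Definition lo (m : nat) (i : 'I_m) : 'I_m.+1 := widen_ord (leqnSn m) i.
Definition hi (m : nat) (i : 'I_m) : 'I_m.+1 := lift ord0 i.

Definition blockob (C : smsCat) (n m : nat) (x : n.-tuple (sob C)) (f : Delta m n)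
    (i : 'I_m) : sob C :=
  tens (take (f (hi i) - f (lo i)) (drop (f (lo i)) (tval x))).

(* indices j with g(i) < j+1 <= g(i+1), in increasing order *)
Definition blockidx (k m : nat) (g : Delta k m) (i : 'I_k) : seq 'I_m :=
  filter (fun j : 'I_m => (g (lo i) <= j) && (j < g (hi i))) (enum 'I_m).

(* Simplicial categories over an ordinary category D (a simplicial     *)
(* functor P : E -> D, D with discrete homs): objects are fibered over *)
(* D, and the hom simplicial set E(x,y) is the coproduct over          *)
(* phi in D(Px,Py) of the pieces fhom x y phi.  Composition and        *)
(* identities are recorded as relations (graphs); this avoids          *)
(* transports along the propositional strict-monoidal equations.       *)
Record sCatOver (D : ordCat) := {
  fob : dob D -> Type;
  fhom : forall c d, fob c -> fob d -> dhom D c d -> nat -> Type;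
  fact : forall c d (x : fob c) (y : fob d) (phi : dhom D c d) m n,
      Delta m n -> fhom x y phi n -> fhom x y phi m;
  fcomp : forall c d e (x : fob c) (y : fob d) (z : fob e)
      (psi : dhom D d e) (phi : dhom D c d) n,
      fhom y z psi n -> fhom x y phi n -> fhom x z (dcomp psi phi) n -> Prop;
  fid : forall c (x : fob c) n, fhom x x (did c) n -> Prop }.
Arguments fob {D}.
Arguments fhom {D} s {c d}.
Arguments fact {D s c d x y phi m n}.
Arguments fcomp {D s c d e x y z psi phi n}.
Arguments fid {D s c x n}.

(* A cloven (split) simplicial opfibration: chosen lifts phi_! x, and a
   predicate singling out the chosen coCartesian lifts x -> phi_! x. *)
Record cloven (D : ordCat) := {
  ctot : sCatOver D;
  liftob : forall c d, dhom D c d -> fob ctot c -> fob ctot d;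
  islift : forall c d (phi : dhom D c d) (x : fob ctot c) n,
      fhom ctot x (liftob phi x) phi n -> Prop }.
Arguments liftob {D} c0 {c d}.
Arguments islift {D} c0 {c d phi x n}.

Definition eqc (D : ordCat) (E : sCatOver D) c d d' e
    (x : fob E c) (y : fob E d) (y' : fob E d') (z : fob E e)
    (psi1 : dhom D d e) (phi1 : dhom D c d) (psi2 : dhom D d' e) (phi2 : dhom D c d') n
    (u : fhom E y z psi1 n) (a : fhom E x y phi1 n)
    (b : fhom E y' z psi2 n) (a' : fhom E x y' phi2 n) : Prop :=
  exists (w : fhom E x z (dcomp psi1 phi1) n) (w' : fhom E x z (dcomp psi2 phi2) n),
    fcomp u a w /\ fcomp b a' w' /\
    existT (fun phi => fhom E x z phi n) _ w = existT (fun phi => fhom E x z phi n) _ w'.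

(* The fiberwise opposite  Gr o op_s o Gr^{-1}(P), unwound:
   objects are those of E, a morphism x -> y over psi is a fiber morphism
   y -> psi_! x (over the identity), identities are the chosen lifts along
   identities, and (tau,psi') o (sigma,psi) = (k^{-1} o psi'_!(sigma) o tau, psi' psi)
   where psi'_!(sigma) = u is characterised by u o lift = lift o sigma and
   k : (psi' psi)_! x -> psi'_! psi_! x is the comparison (the identity in the
   split case) characterised by k o lift = lift o lift. *)
Definition fibop (D : ordCat) (P : cloven D) : sCatOver D :=
  {| fob := fob (ctot P);
     fhom c d x y psi n := fhom (ctot P) y (liftob P psi x) (did d) n;
     fact c d x y psi m n f h := fact f h;
     fcomp c d e x y z psi' psi n tau sigma rho :=
       exists (l1 : fhom (ctot P) y (liftob P psi' y) psi' n)
              (l2 : fhom (ctot P) (liftob P psi x) (liftob P psi' (liftob P psi x)) psi' n)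
              (l3 : fhom (ctot P) x (liftob P (dcomp psi' psi) x) (dcomp psi' psi) n)
              (l4 : fhom (ctot P) x (liftob P psi x) psi n)
              (u : fhom (ctot P) (liftob P psi' y) (liftob P psi' (liftob P psi x)) (did e) n)
              (k : fhom (ctot P) (liftob P (dcomp psi' psi) x)
                                 (liftob P psi' (liftob P psi x)) (did e) n),
         islift P l1 /\ islift P l2 /\ islift P l3 /\ islift P l4 /\
         eqc u l1 l2 sigma /\ eqc k l3 l2 l4 /\ eqc k rho u tau;
     fid c x n e := islift P e |}.

(* Objects over [n]: sequences [x_1,..,x_n]; morphisms [x] -> [y] over  *)
(* f : [m] -> [n] in Delta: prod_i C(x_{f(i-1)+1} (x)..(x) x_{f(i)}, y_i). *)
Definition Ctens_tot (C : smsCat) : sCatOver DeltaOp :=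
  @Build_sCatOver DeltaOp
    (fun n : nat => n.-tuple (sob C))
    (fun (n m : nat) (x : n.-tuple (sob C)) (y : m.-tuple (sob C)) (f : Delta m n) l =>
       forall i : 'I_m, shom C (blockob x f i) (tnth y i) l)
    (fun n m x y f l l' g h => fun i => sact g (h i))
    (fun (n m k : nat) x y z (g : Delta k m) (f : Delta m n) l tau sigma rho =>
       forall i : 'I_k,
         compTH (toTH (tau i))
                (tensL [seq toTH (sigma j) | j <- blockidx g i])
                (toTH (rho i)))
    (fun (n : nat) (x : n.-tuple (sob C)) l e =>
       forall i : 'I_n, toTH (e i) = toTH (sid (tnth x i) l)).

Definition Ctens (C : smsCat) : cloven DeltaOp :=
  @Build_cloven DeltaOp (Ctens_tot C)
    (fun (n m : nat) (f : Delta m n) (x : n.-tuple (sob C)) =>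
       [tuple blockob x f i | i < m] : m.-tuple (sob C))
    (fun (n m : nat) (f : Delta m n) (x : n.-tuple (sob C)) l e =>
       forall i : 'I_m, toTH (e i) = toTH (sid (blockob x f i) l)).

Definition iso_over (D : ordCat) (E F : sCatOver D) : Prop :=
  exists (Fo : forall c, fob E c -> fob F c)
         (Fh : forall c d (x : fob E c) (y : fob E d) (phi : dhom D c d) n,
             fhom E x y phi n -> fhom F (Fo c x) (Fo d y) phi n),
    (forall c, bijective (Fo c)) /\
    (forall c d x y phi n, bijective (@Fh c d x y phi n)) /\
    (forall c d x y phi m n (f : Delta m n) (h : fhom E x y phi n),
        Fh c d x y phi m (fact f h) = fact f (Fh c d x y phi n h)) /\
    (forall c x n (e : fhom E x x (did c) n), fid e <-> fid (Fh c c x x (did c) n e)) /\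
    (forall c d e x y z psi phi n (t : fhom E y z psi n) (s : fhom E x y phi n)
            (r : fhom E x z (dcomp psi phi) n),
        fcomp t s r <->
        fcomp (Fh d e y z psi n t) (Fh c d x y phi n s) (Fh c e x z (dcomp psi phi) n r)).

Definition well_defined (D : ordCat) (E : sCatOver D) : Prop :=
  (forall c d e (x : fob E c) (y : fob E d) (z : fob E e) psi phi n
          (t : fhom E y z psi n) (s : fhom E x y phi n),
      exists r, fcomp t s r /\ forall r', fcomp t s r' -> r' = r) /\
  (forall c (x : fob E c) n, exists i, fid i /\ forall i', @fid D E c x n i' -> i' = i).

(* Main.v *)
Require Import Defs.
From mathcomp Require Import all_boot.
From mathcomp Require Import zify.
From Stdlib Require Import Eqdep FunctionalExtensionality.
Set Implicit Arguments. Unset Strict Implicit. Unset Printing Implicit Defensive.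

Definition castH (C : smsCat) (a a' b b' : sob C) n (e1 : a = a') (e2 : b = b')
  (h : shom C a b n) : shom C a' b' n :=
  match e1 in _ = a1 return shom C a1 b' n with
  | erefl => match e2 in _ = b1 return shom C a b1 n with erefl => h end end.

Lemma toTH_cast C (a a' b b' : sob C) n (e1 : a = a') (e2 : b = b') (h : shom C a b n) :
  toTH (castH e1 e2 h) = toTH h.
Proof. by destruct e1, e2. Qed.

Lemma castK C (a a' b b' : sob C) n (e1 : a = a') (e2 : b = b') (h : shom C a b n) :
  castH (esym e1) (esym e2) (castH e1 e2 h) = h.
Proof. by destruct e1, e2. Qed.

Lemma castK' C (a a' b b' : sob C) n (e1 : a = a') (e2 : b = b') (h : shom C a' b' n) :
  castH e1 e2 (castH (esym e1) (esym e2) h) = h.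
Proof. by destruct e1, e2. Qed.

Lemma cast_sact C (a a' b b' : sob C) m n (f : Delta m n) (e1 : a = a') (e2 : b = b')
  (h : shom C a b n) : castH e1 e2 (sact f h) = sact f (castH e1 e2 h).
Proof. by destruct e1, e2. Qed.

Definition mk C n (A : TH C n) (a b : sob C) (E : projT1 A = (a, b)) : shom C a b n :=
  eq_rect (projT1 A) (fun p => shom C p.1 p.2 n) (projT2 A) (a, b) E.

Lemma mkE C n (A : TH C n) (a b : sob C) (E : projT1 A = (a, b)) : toTH (mk E) = A.
Proof. by case: A E => [p h] /= E; subst p. Qed.

Lemma toTH_inj C n (a b : sob C) (h h' : shom C a b n) : toTH h = toTH h' -> h = h'.
Proof. exact: Eqdep.EqdepTheory.inj_pair2. Qed.

Section HCacc.
Lemma HCidl C (HC : is_strict_monoidal_sCat C) x y n (u : shom C x y n) : scomp (sid y n) u = u.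
Proof. by case: HC => [? [? [? [? [? [H ?]]]]]]. Qed.
Lemma HCidr C (HC : is_strict_monoidal_sCat C) x y n (u : shom C x y n) : scomp u (sid x n) = u.
Proof. by case: HC => [? [? [? [? [? [? [H ?]]]]]]]. Qed.
Lemma HCtsid C (HC : is_strict_monoidal_sCat C) (x y : sob C) n :
  stenm (sid x n) (sid y n) = sid (sten x y) n.
Proof. by case: HC => [? [? [? [? [? [? [? [? [? [H ?]]]]]]]]]]. Qed.
Lemma HCassoc C (HC : is_strict_monoidal_sCat C) (x y z : sob C) :
  sten (sten x y) z = sten x (sten y z).
Proof. by case: HC => [? [? [? [? [? [? [? [? [? [? [H ?]]]]]]]]]]]. Qed.
Lemma HCunl C (HC : is_strict_monoidal_sCat C) (x : sob C) : sten sunit x = x.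
Proof. by case: HC => [? [? [? [? [? [? [? [? [? [? [? [H ?]]]]]]]]]]]]. Qed.
Lemma HCunr C (HC : is_strict_monoidal_sCat C) (x : sob C) : sten x sunit = x.
Proof. by case: HC => [? [? [? [? [? [? [? [? [? [? [? [? [H ?]]]]]]]]]]]]]. Qed.
End HCacc.

Lemma compTH_idl' C (HC : is_strict_monoidal_sCat C) n (B A : TH C n) (b : sob C) :
  (projT1 A).2 = b -> B = toTH (sid b n) -> compTH B A A.
Proof.
case: A => [[x y] u] /= eb ->; subst b.
by exists x, y, y, (sid y n), u; rewrite HCidl.
Qed.

Lemma compTH_idr' C (HC : is_strict_monoidal_sCat C) n (B A : TH C n) (b : sob C) :
  (projT1 B).1 = b -> A = toTH (sid b n) -> compTH B A B.
Proof.
case: B => [[x y] u] /= eb ->; subst b.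
by exists x, x, y, u, (sid x n); rewrite HCidr.
Qed.

Lemma compTH_idl_inv C (HC : is_strict_monoidal_sCat C) n (A R : TH C n) (b : sob C) :
  compTH (toTH (sid b n)) A R -> R = A.
Proof.
case=> [x [y [z [v [u [E1 [-> ->]]]]]]].
have := f_equal (@projT1 _ _) E1 => /= [[eb eb']]; subst y z.
by rewrite -(toTH_inj E1) HCidl.
Qed.

Lemma compTH_idr_inv C (HC : is_strict_monoidal_sCat C) n (B R : TH C n) (b : sob C) :
  compTH B (toTH (sid b n)) R -> R = B.
Proof.
case=> [x [y [z [v [u [-> [E1 ->]]]]]]].
have := f_equal (@projT1 _ _) E1 => /= [[eb eb']]; subst x y.
by rewrite -(toTH_inj E1) HCidr.
Qed.

Lemma compTH_fun C n (B A R R' : TH C n) : compTH B A R -> compTH B A R' -> R = R'.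
Proof.
case=> [x [y [z [v [u [-> [-> ->]]]]]]].
case=> [x' [y' [z' [v' [u' [E1 [E2 ->]]]]]]].
have := f_equal (@projT1 _ _) E1 => /= [[e1 e2]]; subst y' z'.
have := f_equal (@projT1 _ _) E2 => /= [[e1]]; subst x'.
by rewrite (toTH_inj E1) (toTH_inj E2).
Qed.

Lemma lo_val m (i : 'I_m) : nat_of_ord (lo i) = i. Proof. by []. Qed.
Lemma hi_val m (i : 'I_m) : nat_of_ord (hi i) = i.+1. Proof. exact: lift0. Qed.

Lemma filter_iota_range a b m : a <= b -> b <= m ->
  [seq j <- iota 0 m | (a <= j) && (j < b)] = iota a (b - a).
Proof.
move=> hab hbm.
have -> : m = a + ((b - a) + (m - b)) by lia.
rewrite !iotaD filter_cat add0n.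
rewrite (eq_in_filter (a2 := pred0)) ?filter_pred0; last first.
  by move=> j; rewrite mem_iota => /andP[_ h] /=; apply/negbTE; lia.
rewrite filter_cat (eq_in_filter (s := iota (a + (b - a)) _) (a2 := pred0)) ?filter_pred0; last first.
  by move=> j; rewrite mem_iota => /andP[h _] /=; apply/negbTE; lia.
rewrite (eq_in_filter (a2 := predT)) ?filter_predT ?cats0 //.
by move=> j; rewrite mem_iota => /andP[h1 h2] /=; apply/andP; lia.
Qed.

Lemma blockidx_val k m (g : Delta k m) (i : 'I_k) :
  map val (blockidx g i) = iota (g (lo i)) (g (hi i) - g (lo i)).
Proof.
rewrite /blockidx.
rewrite (_ : map val _ = [seq j <- map val (enum 'I_m) | (g (lo i) <= j) && (j < g (hi i))]);
  last exact: esym (filter_map val (fun j : nat => (g (lo i) <= j) && (j < g (hi i))) (enum 'I_m)).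
rewrite val_enum_ord filter_iota_range //.
  by apply: dmono; rewrite lo_val hi_val.
by rewrite -ltnS ltn_ord.
Qed.

Lemma blockidx_id m (i : 'I_m) : blockidx (Delta_id m) i = [:: i].
Proof.
apply: (inj_map val_inj); rewrite blockidx_val /= /bump leq0n add1n subSnn.
by [].
Qed.

Lemma map_tnth_blockidx T (x0 : T) k m (t : m.-tuple T) (g : Delta k m) (i : 'I_k) :
  [seq tnth t j | j <- blockidx g i] = take (g (hi i) - g (lo i)) (drop (g (lo i)) t).
Proof.
have -> : [seq tnth t j | j <- blockidx g i] = [seq nth x0 t j | j <- map val (blockidx g i)].
  by rewrite -map_comp; apply: eq_map => j /=; rewrite (tnth_nth x0).
rewrite blockidx_val map_nth_iota // size_tuple.
have h1 := ltn_ord (g (hi i)). have h2 : g (lo i) <= g (hi i).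
  by apply: dmono; rewrite lo_val hi_val.
lia.
Qed.

Lemma blockob_map C k m (t : m.-tuple (sob C)) (g : Delta k m) (i : 'I_k) :
  blockob t g i = tens [seq tnth t j | j <- blockidx g i].
Proof. by rewrite (map_tnth_blockidx sunit). Qed.

Lemma blockob_id C m (t : m.-tuple (sob C)) (i : 'I_m) : blockob t (Delta_id m) i = tnth t i.
Proof. by rewrite blockob_map blockidx_id. Qed.

Lemma tens_cons C (HC : is_strict_monoidal_sCat C) (a : sob C) s : tens (a :: s) = sten a (tens s).
Proof. by case: s => [|b s] //=; rewrite HCunr. Qed.

Lemma tens_cat C (HC : is_strict_monoidal_sCat C) (s1 s2 : seq (sob C)) :
  tens (s1 ++ s2) = sten (tens s1) (tens s2).
Proof.
elim: s1 => [|a s1 IH]; first by rewrite /= HCunl.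
by rewrite cat_cons !tens_cons // IH HCassoc.
Qed.

Lemma tens_flatten C (HC : is_strict_monoidal_sCat C) (ss : seq (seq (sob C))) :
  tens (flatten ss) = tens (map (@tens C) ss).
Proof.
elim: ss => [|s ss IH] //.
rewrite /= tens_cat // IH. by case: ss {IH} => [|t ss] /=; rewrite ?HCunr.
Qed.

Lemma slice_cat T (s : seq T) p q r : p <= q -> q <= r ->
  take (q - p) (drop p s) ++ take (r - q) (drop q s) = take (r - p) (drop p s).
Proof.
move=> hpq hqr.
have -> : r - p = (q - p) + (r - q) by lia.
by rewrite takeD drop_drop subnK.
Qed.

Lemma flatten_slices T (s : seq T) (P : nat -> nat) :
  (forall i j, i <= j -> P i <= P j) -> forall d a,
  flatten [seq take (P j.+1 - P j) (drop (P j) s) | j <- iota a d]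
  = take (P (a + d) - P a) (drop (P a) s).
Proof.
move=> Pmono; elim=> [|d IH] a /=.
  by rewrite addn0 subnn take0.
rewrite IH slice_cat ?addSnnS //; apply: Pmono; lia.
Qed.

Lemma assoc_blockob C (HC : is_strict_monoidal_sCat C) n m k (x : n.-tuple (sob C))
  (f : Delta m n) (g : Delta k m) (i : 'I_k) :
  tens [seq blockob x f j | j <- blockidx g i] = blockob x (Delta_comp f g) i.
Proof.
pose P (j : nat) : nat := f (inord (minn j m)).
have Pmono : forall i j, i <= j -> P i <= P j.
  move=> i1 j1 h; apply: dmono; rewrite !inordK; try lia.
have PE : forall j : 'I_m, blockob x f j = tens (take (P j.+1 - P j) (drop (P j) x)).
  move=> j; have hj := ltn_ord j; rewrite /blockob /P.
  have -> : inord (minn j.+1 m) = hi j by apply: ord_inj; rewrite inordK ?hi_val; lia.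
  by have -> : inord (minn j m) = lo j by apply: ord_inj; rewrite inordK ?lo_val; lia.
have -> : [seq blockob x f j | j <- blockidx g i]
   = [seq tens (take (P j.+1 - P j) (drop (P j) x)) | j <- map val (blockidx g i)].
  by rewrite -map_comp; apply: eq_map => j /=; rewrite PE.
rewrite blockidx_val map_comp -tens_flatten // flatten_slices //.
have hl : g (lo i) <= g (hi i) by apply: dmono; rewrite lo_val hi_val.
rewrite subnKC // /blockob /P /=.
have hh := ltn_ord (g (hi i)). have hl' := ltn_ord (g (lo i)).
rewrite (_ : minn (g (hi i)) m = g (hi i)); last by lia.
rewrite (_ : minn (g (lo i)) m = g (lo i)); last by lia.
by rewrite !inord_val.
Qed.

Lemma tensL_sid C (HC : is_strict_monoidal_sCat C) n (bs : seq (sob C)) :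
  tensL [seq toTH (sid b n) | b <- bs] = toTH (sid (tens bs) n).
Proof.
elim: bs => [|a bs IH] //.
case: bs IH => [|b bs] IH //.
have -> : tensL [seq toTH (sid c n) | c <- [:: a, b & bs]] = tenTH (toTH (sid a n)) (tensL [seq toTH (sid c n) | c <- b :: bs]) by []. rewrite IH. have -> : tens [:: a, b & bs] = sten a (tens (b :: bs)) by []. by rewrite /tenTH /toTH -HCtsid.
Qed.

Lemma tenTH_obj C n (a b : TH C n) :
  projT1 (tenTH a b) = (sten (projT1 a).1 (projT1 b).1, sten (projT1 a).2 (projT1 b).2).
Proof. by case: a => [[? ?] ?]; case: b => [[? ?] ?]. Qed.

Lemma tensL_obj C n (L : seq (TH C n)) :
  projT1 (tensL L) = (tens [seq (projT1 A).1 | A <- L], tens [seq (projT1 A).2 | A <- L]).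
Proof.
elim: L => [|a L IH] //.
case: L IH => [|b L] IH; first by case: a => [[? ?] ?].
by rewrite [tensL _]/= tenTH_obj IH.
Qed.

Definition liftm C n m (g : Delta m n) (x : n.-tuple (sob C)) l :
  forall i : 'I_m, shom C (blockob x g i) (tnth [tuple blockob x g i | i < m] i) l :=
  fun i => castH (erefl _) (esym (tnth_mktuple (fun i => blockob x g i) i)) (sid (blockob x g i) l).

Lemma liftmE C n m (g : Delta m n) (x : n.-tuple (sob C)) l i :
  toTH (liftm g x l i) = toTH (sid (blockob x g i) l).
Proof. exact: toTH_cast. Qed.

Lemma SL_obj C n0 n1 n2 (x : n0.-tuple (sob C)) (y : n1.-tuple (sob C))
  (psi' : Delta n2 n1) (psi : Delta n1 n0) n
  (sigma : forall i : 'I_n1, shom C (blockob y (Delta_id n1) i) (tnth [tuple blockob x psi i | i < n1] i) n)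
  (i : 'I_n2) :
  projT1 (tensL [seq toTH (sigma j) | j <- blockidx psi' i])
  = (blockob y psi' i, blockob [tuple blockob x psi j | j < n1] psi' i).
Proof.
rewrite tensL_obj -!map_comp !blockob_map; congr (tens _, tens _).
by apply: eq_map => j /=; rewrite blockob_id.
Qed.

Lemma ASSOC C (HC : is_strict_monoidal_sCat C) n0 n1 n2 (x : n0.-tuple (sob C))
  (psi' : Delta n2 n1) (psi : Delta n1 n0) (i : 'I_n2) :
  blockob [tuple blockob x psi j | j < n1] psi' i = blockob x (Delta_comp psi psi') i.
Proof.
rewrite blockob_map -assoc_blockob //; congr tens.
by apply: eq_map => j; rewrite tnth_mktuple.
Qed.

Lemma fibop_fcomp_iff C (HC : is_strict_monoidal_sCat C) n0 n1 n2
  (x : n0.-tuple (sob C)) (y : n1.-tuple (sob C)) (z : n2.-tuple (sob C))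
  (psi' : Delta n2 n1) (psi : Delta n1 n0) n
  (tau : forall i : 'I_n2, shom C (blockob z (Delta_id n2) i) (tnth [tuple blockob y psi' i | i < n2] i) n)
  (sigma : forall i : 'I_n1, shom C (blockob y (Delta_id n1) i) (tnth [tuple blockob x psi i | i < n1] i) n)
  (rho : forall i : 'I_n2, shom C (blockob z (Delta_id n2) i)
                              (tnth [tuple blockob x (Delta_comp psi psi') i | i < n2] i) n) :
  @fcomp DeltaOp (fibop (Ctens C)) n0 n1 n2 x y z psi' psi n tau sigma rho <->
  (forall i : 'I_n2, compTH (tensL [seq toTH (sigma j) | j <- blockidx psi' i])
                            (toTH (tau i)) (toTH (rho i))).
Proof.
split.
- case=> [l1 [l2 [l3 [l4 [u [k [h1 [h2 [h3 [h4 [E1 [E2 E3]]]]]]]]]]]] i.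
  case: E1 => [w [w' [Hw [Hw' Eww]]]].
  have {Eww} Eww := Eqdep.EqdepTheory.inj_pair2 _ _ _ _ _ Eww; subst w'.
  case: E2 => [W [W' [HW [HW' EW]]]].
  have {EW} EW := Eqdep.EqdepTheory.inj_pair2 _ _ _ _ _ EW; subst W'.
  case: E3 => [V [V' [HV [HV' EV]]]].
  have {EV} EV := Eqdep.EqdepTheory.inj_pair2 _ _ _ _ _ EV; subst V'.
  have e1 : toTH (w i) = toTH (u i).
    by have := Hw i; rewrite blockidx_id /= h1; move/(compTH_idr_inv HC).
  have e2 : toTH (w i) = tensL [seq toTH (sigma j) | j <- blockidx psi' i].
    by have := Hw' i; rewrite h2; move/(compTH_idl_inv HC).
  have e3 : toTH (W i) = toTH (k i).
    by have := HW i; rewrite blockidx_id /= h3; move/(compTH_idr_inv HC).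
  have e4 : toTH (W i) = tensL [seq toTH (l4 j) | j <- blockidx psi' i].
    by have := HW' i; rewrite h2; move/(compTH_idl_inv HC).
  rewrite (eq_map (fun j => h4 j)) (map_comp (fun b => toTH (sid b n))) tensL_sid // in e4.
  have e5 : toTH (V i) = toTH (rho i).
    by have := HV i; rewrite blockidx_id /= -e3 e4; move/(compTH_idl_inv HC).
  by have := HV' i; rewrite blockidx_id /= -e1 e2 e5.
- move=> M.
  pose SL i := tensL [seq toTH (sigma j) | j <- blockidx psi' i].
  have AS := ASSOC HC x psi' psi.
  have Eu : forall i, projT1 (SL i) = (blockob [tuple blockob y psi' i | i < n2] (Delta_id n2) i,
      tnth [tuple blockob [tuple blockob x psi j | j < n1] psi' i | i < n2] i).
    by move=> i; rewrite /SL SL_obj blockob_id !tnth_mktuple.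
  have Ew : forall i, projT1 (SL i) = (blockob y (Delta_comp psi' (Delta_id n2)) i,
      tnth [tuple blockob [tuple blockob x psi j | j < n1] psi' i | i < n2] i).
    by move=> i; rewrite /SL SL_obj !tnth_mktuple.
  have Ek : forall i, projT1 (toTH (sid (blockob x (Delta_comp psi psi') i) n))
     = (blockob [tuple blockob x (Delta_comp psi psi') i | i < n2] (Delta_id n2) i,
        tnth [tuple blockob [tuple blockob x psi j | j < n1] psi' i | i < n2] i).
    by move=> i; rewrite blockob_id !tnth_mktuple AS.
  have EW : forall i, projT1 (toTH (sid (blockob x (Delta_comp psi psi') i) n))
     = (blockob x (Delta_comp (Delta_comp psi psi') (Delta_id n2)) i,
        tnth [tuple blockob [tuple blockob x psi j | j < n1] psi' i | i < n2] i).
    by move=> i; rewrite !tnth_mktuple AS.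
  have EV : forall i, projT1 (toTH (rho i))
     = (blockob z (Delta_comp (Delta_id n2) (Delta_id n2)) i,
        tnth [tuple blockob [tuple blockob x psi j | j < n1] psi' i | i < n2] i).
    by move=> i; rewrite /= !tnth_mktuple AS.
  exists (liftm psi' y n), (liftm psi' [tuple blockob x psi j | j < n1] n),
    (liftm (Delta_comp psi psi') x n), (liftm psi x n),
    (fun i => mk (Eu i)), (fun i => mk (Ek i)).
  do 4! (split; first by move=> i; exact: liftmE).
  split; last split.
  + exists (fun i => mk (Ew i)), (fun i => mk (Ew i)); split; last split; last by [].
    * move=> i; rewrite blockidx_id /= !mkE liftmE.
      by apply: (compTH_idr' HC) => //; rewrite /SL SL_obj.
    * move=> i; rewrite mkE liftmE.
      by apply: (compTH_idl' HC) => //; rewrite /SL SL_obj.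
  + exists (fun i => mk (EW i)), (fun i => mk (EW i)); split; last split; last by [].
    * move=> i; rewrite blockidx_id /= !mkE liftmE.
      by apply: (compTH_idl' HC).
    * move=> i; rewrite mkE liftmE.
      rewrite (eq_map (fun j => liftmE psi x n j)) (map_comp (fun b => toTH (sid b n))) tensL_sid //.
      rewrite assoc_blockob //. by apply: (compTH_idl' HC) => //=; rewrite AS.
  + exists (fun i => mk (EV i)), (fun i => mk (EV i)); split; last split; last by [].
    * move=> i; rewrite blockidx_id /= !mkE.
      by apply: (compTH_idl' HC) => //=; rewrite tnth_mktuple.
    * by move=> i; rewrite blockidx_id /= !mkE; apply: M.
Qed.

Lemma tens_op C (s : seq (sob C)) : @tens (opC C) s = @tens C s.
Proof. by elim: s => [|a [|b s] IH] //; exact: (congr1 (@sten C a) IH). Qed.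

Lemma blockob_op C c d (x : c.-tuple (sob C)) (phi : Delta d c) i :
  @blockob (opC C) c d x phi i = @blockob C c d x phi i.
Proof. exact: tens_op. Qed.

Definition Fh C c d (x : c.-tuple (sob C)) (y : d.-tuple (sob C)) (phi : Delta d c) n
  (h : forall i : 'I_d, shom C (blockob y (Delta_id d) i) (tnth [tuple blockob x phi i | i < d] i) n) :
  forall i : 'I_d, shom (opC C) (@blockob (opC C) c d x phi i) (tnth y i) n :=
  fun i => castH (blockob_id y i) (etrans (tnth_mktuple (fun i => blockob x phi i) i) (esym (blockob_op x phi i))) (h i).

Definition Fhinv C c d (x : c.-tuple (sob C)) (y : d.-tuple (sob C)) (phi : Delta d c) n
  (h : forall i : 'I_d, shom (opC C) (@blockob (opC C) c d x phi i) (tnth y i) n) :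
  forall i : 'I_d, shom C (blockob y (Delta_id d) i) (tnth [tuple blockob x phi i | i < d] i) n :=
  fun i => castH (esym (blockob_id y i)) (esym (etrans (tnth_mktuple (fun i => blockob x phi i) i) (esym (blockob_op x phi i)))) (h i).

Definition swapTH C n (A : TH C n) : TH (opC C) n :=
  let: existT p h := A in
  existT (fun q : sob C * sob C => shom C q.2 q.1 n) (p.2, p.1) h.

Definition unswapTH C n (A : TH (opC C) n) : TH C n :=
  let: existT p h := A in
  existT (fun q : sob C * sob C => shom C q.1 q.2 n) (p.2, p.1) h.

Lemma swapK C n (A : TH C n) : unswapTH (swapTH A) = A.
Proof. by case: A => [[? ?] ?]. Qed.

Lemma swap_inj C n : injective (@swapTH C n).
Proof. by move=> A B /(f_equal (@unswapTH C n)); rewrite !swapK. Qed.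

Lemma toTH_op_cast C n (a a' b b' : sob C) (e1 : a = a') (e2 : b = b') (h : shom C a b n) :
  @toTH (opC C) b' a' n (castH e1 e2 h) = swapTH (toTH h).
Proof. by destruct e1, e2. Qed.

Lemma toTH_op C n (a b : sob C) (h : shom C a b n) :
  @toTH (opC C) b a n h = swapTH (toTH h).
Proof. by []. Qed.

Lemma tensL_swap C n (L : seq (TH C n)) :
  @tensL (opC C) n (map (@swapTH C n) L) = swapTH (tensL L).
Proof.
elim: L => [|a L IH] //.
case: L IH => [|b L] IH //.
have -> : @tensL (opC C) n (map (@swapTH C n) [:: a, b & L])
   = @tenTH (opC C) n (swapTH a) (@tensL (opC C) n (map (@swapTH C n) (b :: L))) by [].
rewrite IH.
have -> : tensL [:: a, b & L] = tenTH a (tensL (b :: L)) by [].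
by case: a => [[? ?] ?]; case: (tensL (b :: L)) => [[? ?] ?].
Qed.

Lemma compTH_swap C n (T S R : TH C n) :
  @compTH (opC C) n (swapTH T) (swapTH S) (swapTH R) <-> compTH S T R.
Proof.
split.
- case=> [x [y [z [v [u [E1 [E2 E3]]]]]]].
  rewrite toTH_op in E1; rewrite toTH_op in E2.
  rewrite (toTH_op (@scomp C _ _ _ n u v)) in E3.
  move/swap_inj: E1 => ->; move/swap_inj: E2 => ->; move/swap_inj: E3 => ->.
  by exists z, y, x, u, v.
- case=> [x [y [z [v [u [-> [-> ->]]]]]]].
  by exists z, y, x, u, v.
Qed.

Lemma target_fcomp_iff C n0 n1 n2
  (x : n0.-tuple (sob C)) (y : n1.-tuple (sob C)) (z : n2.-tuple (sob C))
  (psi' : Delta n2 n1) (psi : Delta n1 n0) n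
  (tau : forall i : 'I_n2, shom C (blockob z (Delta_id n2) i) (tnth [tuple blockob y psi' i | i < n2] i) n)
  (sigma : forall i : 'I_n1, shom C (blockob y (Delta_id n1) i) (tnth [tuple blockob x psi i | i < n1] i) n)
  (rho : forall i : 'I_n2, shom C (blockob z (Delta_id n2) i)
                              (tnth [tuple blockob x (Delta_comp psi psi') i | i < n2] i) n) :
  @fcomp DeltaOp (ctot (Ctens (opC C))) n0 n1 n2 x y z psi' psi n
     (Fh tau) (Fh sigma) (@Fh C n0 n2 x z (Delta_comp psi psi') n rho) <->
  (forall i : 'I_n2, compTH (tensL [seq toTH (sigma j) | j <- blockidx psi' i])
                            (toTH (tau i)) (toTH (rho i))).
Proof.
have E : forall i, [seq toTH (@Fh C n0 n1 x y psi n sigma j) | j <- blockidx psi' i]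
   = map (@swapTH C n) [seq toTH (sigma j) | j <- blockidx psi' i].
  by move=> i; rewrite -map_comp; apply: eq_map => j /=; rewrite /Fh toTH_op_cast.
split=> H i; have := H i.
- rewrite /= E tensL_swap /Fh !toTH_op_cast.
  by move/compTH_swap.
- move=> Hi; rewrite /= E tensL_swap /Fh !toTH_op_cast.
  by apply/compTH_swap.
Qed.

Theorem corollary5p9 (C : smsCat) (HC : is_strict_monoidal_sCat C) :
  well_defined (fibop (Ctens C)) /\
  iso_over (fibop (Ctens C)) (ctot (Ctens (opC C))).
Proof.
split; first split.
- move=> c d e x y z psi phi n t s.
  pose SL i := tensL [seq toTH (s j) | j <- blockidx psi i].
  have Ev : forall i, projT1 (SL i) = (tnth [tuple blockob y psi i | i < e] i,
                                      blockob [tuple blockob x phi j | j < d] psi i).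
    by move=> i; rewrite /SL SL_obj tnth_mktuple.
  pose v i := mk (Ev i).
  have EQ : forall i, projT1 (toTH (scomp (v i) (t i))) =
     (blockob z (Delta_id e) i, tnth [tuple blockob x (Delta_comp phi psi) i | i < e] i).
    by move=> i; rewrite /= tnth_mktuple ASSOC.
  exists (fun i => mk (EQ i)); split.
    apply/(fibop_fcomp_iff HC) => i; rewrite mkE.
    by exists (blockob z (Delta_id e) i), (tnth [tuple blockob y psi i | i < e] i), (blockob [tuple blockob x phi j | j < d] psi i), (v i), (t i); rewrite mkE.
  move=> r' /(fibop_fcomp_iff HC) H'.
  apply: functional_extensionality_dep => i; apply: toTH_inj.
  apply: (compTH_fun (H' i)); rewrite mkE.
  by exists (blockob z (Delta_id e) i), (tnth [tuple blockob y psi i | i < e] i), (blockob [tuple blockob x phi j | j < d] psi i), (v i), (t i); rewrite mkE.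
- move=> c x n; exists (liftm (Delta_id c) x n); split.
    by move=> i; exact: liftmE.
  move=> i' H; apply: functional_extensionality_dep => i; apply: toTH_inj.
  by rewrite H liftmE.
- exists (fun c (x : c.-tuple (sob C)) => x), (fun c d x y phi n h => @Fh C c d x y phi n h).
  split; first by move=> c; exists id.
  split.
    move=> c d x y phi n; exists (@Fhinv C c d x y phi n) => h;
      apply: functional_extensionality_dep => i; rewrite /Fh /Fhinv ?castK ?castK' //.
  split.
    move=> c d x y phi m n f h; apply: functional_extensionality_dep => i.
    by rewrite /Fh /= cast_sact.
  split.
    move=> c x n e; split=> H i; have := H i.
    + move=> Hi; rewrite /Fh toTH_op_cast (toTH_op (sid (tnth x i) n)); congr swapTH.
      by rewrite Hi blockob_id.
    + rewrite /Fh toTH_op_cast (toTH_op (sid (tnth x i) n)) => /swap_inj ->.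
      by rewrite blockob_id.
  move=> c d e x y z psi phi n t s r.
  by rewrite (fibop_fcomp_iff HC) (target_fcomp_iff t s r).
Qed.
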